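(* There exists an algorithm that produces, for any term $t$, positive integers $m,n_1,\dots,n_m$ and basic terms $t_{i,j}$ ($i\in\{1,\dots,m\}$, $j\in\{1,\dots,n_i\}$) such that for every fully distributive involutive residuated lattice $\mathbf{L}$, $\mathbf{L}\models t\approx\bigwedge_{i=1}^m\bigvee_{j=1}^{n_i}t_{i,j}$.
   Context: An involutive residuated lattice is an algebra $\langle L,\wedge,\vee,\cdot,{}',1\rangle$ such that $\langle L,\cdot,1\rangle$ is a monoid, $\langle L,\wedge,\vee\rangle$ is a lattice, ${}'$ is an involution of the lattice ($a\le b\iff b'\le a'$, $a''=a$), and for all $a,b,c$: $b\le(c'a)'\iff ab\le c\iff a\le(bc')'$. It is fully distributive if its lattice reduct is distributive and $a(b_1\wedge b_2)c=ab_1c\wedge ab_2c$ for all $a,b_1,b_2,c$. Terms are built from a countably infinite set of variables using $\wedge,\vee,\cdot,{}',1$; a basic term is one built using only $\cdot$, ${}'$ and $1$ (and variables). *)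

(* Defs.v *)
From Stdlib Require Import List.
Import ListNotations.

Inductive term : Type :=
| TVar  : nat -> term
| TMeet : term -> term -> term
| TJoin : term -> term -> term
| TMul  : term -> term -> term
| TInv  : term -> term
| TOne  : term.

Fixpoint is_basic (t : term) : Prop :=
  match t with
  | TVar _ => True
  | TMeet _ _ => False
  | TJoin _ _ => False
  | TMul a b => is_basic a /\ is_basic b
  | TInv a => is_basic a
  | TOne => True
  end.

Record IRL : Type := {
  car :> Type;
  meet : car -> car -> car;
  join : car -> car -> car;
  mul  : car -> car -> car;
  inv  : car -> car;
  one  : car;
  meet_comm : forall a b, meet a b = meet b a;
  join_comm : forall a b, join a b = join b a;
  meet_assoc : forall a b c, meet a (meet b c) = meet (meet a b) c;
  join_assoc : forall a b c, join a (join b c) = join (join a b) c;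
  meet_absorb : forall a b, meet a (join a b) = a;
  join_absorb : forall a b, join a (meet a b) = a;
  mul_assoc : forall a b c, mul a (mul b c) = mul (mul a b) c;
  mul_one_l : forall a, mul one a = a;
  mul_one_r : forall a, mul a one = a;
  inv_antitone : forall a b, meet a b = a <-> meet (inv b) (inv a) = inv b;
  inv_inv : forall a, inv (inv a) = a;
  (* residuation: b <= (c'a)'  <->  ab <= c  <->  a <= (bc')' *)
  resid_l : forall a b c,
    meet b (inv (mul (inv c) a)) = b <-> meet (mul a b) c = mul a b;
  resid_r : forall a b c,
    meet (mul a b) c = mul a b <-> meet a (inv (mul b (inv c))) = a
}.

Definition le (L : IRL) (a b : L) : Prop := meet L a b = a.

Definition fully_distributive (L : IRL) : Prop :=
  (forall a b c : L, meet L a (join L b c) = join L (meet L a b) (meet L a c)) /\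
  (forall a b1 b2 c : L,
     mul L (mul L a (meet L b1 b2)) c =
     meet L (mul L (mul L a b1) c) (mul L (mul L a b2) c)).

Fixpoint eval (L : IRL) (v : nat -> L) (t : term) : L :=
  match t with
  | TVar n => v n
  | TMeet a b => meet L (eval L v a) (eval L v b)
  | TJoin a b => join L (eval L v a) (eval L v b)
  | TMul a b => mul L (eval L v a) (eval L v b)
  | TInv a => inv L (eval L v a)
  | TOne => one L
  end.

Definition models_eq (L : IRL) (s t : term) : Prop :=
  forall v : nat -> L, eval L v s = eval L v t.

(* Iterated join / meet of a list of terms, as terms; intended for
   nonempty lists (the default TOne is never used in that case). *)
Definition big_join (l : list term) : term :=
  match l with
  | [] => TOne
  | x :: xs => fold_left TJoin xs x
  end.

Definition big_meet (l : list term) : term :=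
  match l with
  | [] => TOne
  | x :: xs => fold_left TMeet xs x
  end.

Definition meet_of_joins (tbl : list (list term)) : term :=
  big_meet (map big_join tbl).

(* Main.v *)
Require Import Defs.
From Stdlib Require Import List.
Import ListNotations.

Definition NE (A : Type) := (A * list A)%type.
Definition foldNE {A B} (op : B -> B -> B) (f : A -> B) (a : NE A) : B :=
  fold_left (fun acc y => op acc (f y)) (snd a) (f (fst a)).
Definition ne_single {A} (x : A) : NE A := (x, nil).
Definition ne_app {A} (a b : NE A) : NE A := (fst a, snd a ++ fst b :: snd b).
Definition ne_map {A B} (g : A -> B) (a : NE A) : NE B := (g (fst a), map g (snd a)).
Definition ne_bind {A B} (g : A -> NE B) (a : NE A) : NE B := foldNE ne_app g a.

Lemma fold_morph {A B C} (op : B -> B -> B) (op' : C -> C -> C) (h : B -> C) (f : A -> B) :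
  (forall x y, h (op x y) = op' (h x) (h y)) -> forall l acc,
  h (fold_left (fun acc y => op acc (f y)) l acc) =
  fold_left (fun acc y => op' acc (h (f y))) l (h acc).
Proof. intros H l; induction l; simpl; intros; auto. rewrite IHl, H. reflexivity. Qed.

Lemma foldNE_morph {A B C} (op : B -> B -> B) (op' : C -> C -> C) (h : B -> C) (f : A -> B) a :
  (forall x y, h (op x y) = op' (h x) (h y)) ->
  h (foldNE op f a) = foldNE op' (fun x => h (f x)) a.
Proof. intros H; destruct a; unfold foldNE; simpl; apply fold_morph; auto. Qed.

Lemma fold_assoc {A B} (op : B -> B -> B) (f : A -> B) :
  (forall x y z, op (op x y) z = op x (op y z)) -> forall l c d,
  fold_left (fun acc y => op acc (f y)) l (op c d) = op c (fold_left (fun acc y => op acc (f y)) l d).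
Proof. intros H l; induction l; simpl; intros; auto. rewrite H; apply IHl. Qed.

Lemma foldNE_app {A B} (op : B -> B -> B) (f : A -> B) a b :
  (forall x y z, op (op x y) z = op x (op y z)) ->
  foldNE op f (ne_app a b) = op (foldNE op f a) (foldNE op f b).
Proof.
  intros H; destruct a as [x xs], b as [y ys]; unfold foldNE, ne_app; simpl.
  rewrite fold_left_app; simpl. apply fold_assoc; auto.
Qed.

Lemma fold_map {A A' B} (op : B -> B -> B) (f : A' -> B) (g : A -> A') : forall l acc,
  fold_left (fun acc y => op acc (f y)) (map g l) acc =
  fold_left (fun acc y => op acc (f (g y))) l acc.
Proof. induction l; simpl; intros; auto. Qed.

Lemma foldNE_map {A A' B} (op : B -> B -> B) (f : A' -> B) (g : A -> A') a :
  foldNE op f (ne_map g a) = foldNE op (fun x => f (g x)) a.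
Proof. destruct a; unfold foldNE, ne_map; simpl; apply fold_map. Qed.

Lemma foldNE_bind {A A' B} (op : B -> B -> B) (f : A' -> B) (g : A -> NE A') a :
  (forall x y z, op (op x y) z = op x (op y z)) ->
  foldNE op f (ne_bind g a) = foldNE op (fun x => foldNE op f (g x)) a.
Proof. intros H; unfold ne_bind; apply foldNE_morph; intros; apply foldNE_app; auto. Qed.

Lemma fold_ext {A B} (op : B -> B -> B) (f g : A -> B) :
  (forall y, f y = g y) -> forall l a,
  fold_left (fun acc y => op acc (f y)) l a = fold_left (fun acc y => op acc (g y)) l a.
Proof. intros H l; induction l; simpl; intros; auto. rewrite H; apply IHl. Qed.

Lemma foldNE_ext {A B} (op : B -> B -> B) (f g : A -> B) a :
  (forall y, f y = g y) -> foldNE op f a = foldNE op g a.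
Proof. intros H; destruct a; unfold foldNE; simpl; rewrite H; apply fold_ext; auto. Qed.

Lemma meet_idem (L : IRL) (a : L) : meet L a a = a.
Proof.
  transitivity (meet L a (join L a (meet L a a))).
  - rewrite join_absorb; reflexivity.
  - apply meet_absorb.
Qed.

Lemma le_join (L : IRL) (a b : L) : le L a b <-> join L a b = b.
Proof.
  unfold le; split; intro H.
  - rewrite <- H. rewrite join_comm, meet_comm. apply join_absorb.
  - rewrite <- H. apply meet_absorb.
Qed.

Lemma le_refl (L : IRL) (a : L) : le L a a.
Proof. apply meet_idem. Qed.

Lemma le_trans (L : IRL) (a b c : L) : le L a b -> le L b c -> le L a c.
Proof.
  unfold le; intros H1 H2. rewrite <- H1, <- meet_assoc, H2. reflexivity.
Qed.

Lemma le_antisym (L : IRL) (a b : L) : le L a b -> le L b a -> a = b.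
Proof. unfold le; intros H1 H2. rewrite <- H1. rewrite <- H2 at 2. apply meet_comm. Qed.

Lemma join_lub (L : IRL) (a b c : L) : le L a c -> le L b c -> le L (join L a b) c.
Proof.
  rewrite !le_join; intros H1 H2. rewrite <- join_assoc, H2, H1. reflexivity.
Qed.

Lemma le_joinl (L : IRL) (a b : L) : le L a (join L a b).
Proof. apply meet_absorb. Qed.

Lemma le_joinr (L : IRL) (a b : L) : le L b (join L a b).
Proof. rewrite join_comm; apply le_joinl. Qed.

Lemma meet_glb (L : IRL) (a b c : L) : le L c a -> le L c b -> le L c (meet L a b).
Proof. unfold le; intros H1 H2. rewrite meet_assoc, H1, H2. reflexivity. Qed.

Lemma le_meetl (L : IRL) (a b : L) : le L (meet L a b) a.
Proof.
  unfold le. rewrite (meet_comm L a b), <- meet_assoc, meet_idem. reflexivity.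
Qed.

Lemma le_meetr (L : IRL) (a b : L) : le L (meet L a b) b.
Proof. rewrite meet_comm; apply le_meetl. Qed.

Lemma join_meet_distr_l (L : IRL) (D : forall a b c : L, meet L a (join L b c) = join L (meet L a b) (meet L a c))
  (x y z : L) : join L x (meet L y z) = meet L (join L x y) (join L x z).
Proof.
  rewrite D. rewrite (meet_comm L (join L x y) x), meet_absorb.
  rewrite (meet_comm L (join L x y) z), D.
  rewrite join_assoc, (meet_comm L z x), join_absorb, (meet_comm L z y). reflexivity.
Qed.

Lemma join_meet_distr_r (L : IRL) (D : forall a b c : L, meet L a (join L b c) = join L (meet L a b) (meet L a c))
  (x y z : L) : join L (meet L y z) x = meet L (join L y x) (join L z x).
Proof.
  rewrite join_comm, join_meet_distr_l by auto. rewrite (join_comm L x y), (join_comm L x z). reflexivity.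
Qed.

Lemma inv_anti (L : IRL) (a b : L) : le L a b -> le L (inv L b) (inv L a).
Proof. unfold le; apply inv_antitone. Qed.

Lemma inv_meet (L : IRL) (x y : L) : inv L (meet L x y) = join L (inv L x) (inv L y).
Proof.
  apply le_antisym.
  - set (J := join L (inv L x) (inv L y)).
    assert (H : le L (inv L J) (meet L x y)).
    { apply meet_glb.
      - rewrite <- (inv_inv L x). apply inv_anti, le_joinl.
      - rewrite <- (inv_inv L y). apply inv_anti, le_joinr. }
    apply inv_anti in H. rewrite inv_inv in H. exact H.
  - apply join_lub; apply inv_anti; [apply le_meetl | apply le_meetr].
Qed.

Lemma inv_join (L : IRL) (x y : L) : inv L (join L x y) = meet L (inv L x) (inv L y).
Proof.
  rewrite <- (inv_inv L x) at 1. rewrite <- (inv_inv L y) at 1.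
  rewrite <- inv_meet, inv_inv. reflexivity.
Qed.

Lemma mul_mono_l (L : IRL) (a b c : L) : le L b c -> le L (mul L a b) (mul L a c).
Proof.
  intros H. apply (resid_l L). eapply le_trans; [exact H|].
  apply (resid_l L). apply le_refl.
Qed.

Lemma mul_mono_r (L : IRL) (a b c : L) : le L b c -> le L (mul L b a) (mul L c a).
Proof.
  intros H. apply (resid_r L). eapply le_trans; [exact H|].
  apply (resid_r L). apply le_refl.
Qed.

Lemma mul_join_l (L : IRL) (a b c : L) : mul L a (join L b c) = join L (mul L a b) (mul L a c).
Proof.
  apply le_antisym.
  - apply (resid_l L). apply join_lub; apply (resid_l L); [apply le_joinl | apply le_joinr].
  - apply join_lub; apply mul_mono_l; [apply le_joinl | apply le_joinr].
Qed.

Lemma mul_join_r (L : IRL) (a b c : L) : mul L (join L b c) a = join L (mul L b a) (mul L c a).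
Proof.
  apply le_antisym.
  - apply (resid_r L). apply join_lub; apply (resid_r L); [apply le_joinl | apply le_joinr].
  - apply join_lub; apply mul_mono_r; [apply le_joinl | apply le_joinr].
Qed.

Lemma mul_meet_l (L : IRL) (FD : fully_distributive L) (a b c : L) :
  mul L a (meet L b c) = meet L (mul L a b) (mul L a c).
Proof.
  destruct FD as [_ F]. pose proof (F a b c (one L)) as H. rewrite !mul_one_r in H. exact H.
Qed.

Lemma mul_meet_r (L : IRL) (FD : fully_distributive L) (a b c : L) :
  mul L (meet L b c) a = meet L (mul L b a) (mul L c a).
Proof.
  destruct FD as [_ F]. pose proof (F (one L) b c a) as H. rewrite !mul_one_l in H. exact H.
Qed.

Definition bterm := {s : term | is_basic s}.
Definition bvar n : bterm := exist _ (TVar n) I.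
Definition bone : bterm := exist _ TOne I.
Definition bmul (x y : bterm) : bterm :=
  exist _ (TMul (proj1_sig x) (proj1_sig y)) (conj (proj2_sig x) (proj2_sig y)).
Definition binv (x : bterm) : bterm := exist _ (TInv (proj1_sig x)) (proj2_sig x).

Definition row := NE bterm.
Definition cnf := NE row.

Definition nf_join (A B : cnf) : cnf := ne_bind (fun a => ne_map (fun b => ne_app a b) B) A.
Definition rowmul (a b : row) : row := ne_bind (fun x => ne_map (fun y => bmul x y) b) a.
Definition nf_mul (A B : cnf) : cnf := ne_bind (fun a => ne_map (fun b => rowmul a b) B) A.
Definition rowinv (r : row) : cnf := ne_map (fun x => ne_single (binv x)) r.
Definition nf_inv (A : cnf) : cnf := foldNE nf_join rowinv A.

Fixpoint nf (t : term) : cnf :=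
  match t with
  | TVar n => ne_single (ne_single (bvar n))
  | TOne => ne_single (ne_single bone)
  | TMeet a b => ne_app (nf a) (nf b)
  | TJoin a b => nf_join (nf a) (nf b)
  | TMul a b => nf_mul (nf a) (nf b)
  | TInv a => nf_inv (nf a)
  end.

Definition ev (L : IRL) (v : nat -> L) (b : bterm) : L := eval L v (proj1_sig b).
Definition SJ (L : IRL) (v : nat -> L) (r : row) : L := foldNE (join L) (ev L v) r.
Definition SM (L : IRL) (v : nat -> L) (A : cnf) : L := foldNE (meet L) (SJ L v) A.

Lemma massoc (L : IRL) : forall x y z : L, meet L (meet L x y) z = meet L x (meet L y z).
Proof. intros; symmetry; apply meet_assoc. Qed.
Lemma jassoc (L : IRL) : forall x y z : L, join L (join L x y) z = join L x (join L y z).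
Proof. intros; symmetry; apply join_assoc. Qed.

Lemma SJ_app L v a b : SJ L v (ne_app a b) = join L (SJ L v a) (SJ L v b).
Proof. apply foldNE_app, jassoc. Qed.

Lemma SM_app L v a b : SM L v (ne_app a b) = meet L (SM L v a) (SM L v b).
Proof. apply foldNE_app, massoc. Qed.

Lemma SM_join L (FD : fully_distributive L) v A B :
  SM L v (nf_join A B) = join L (SM L v A) (SM L v B).
Proof.
  destruct FD as [D _].
  unfold nf_join, SM. rewrite foldNE_bind by apply massoc.
  transitivity (foldNE (meet L) (fun a => join L (SJ L v a) (foldNE (meet L) (SJ L v) B)) A).
  - apply foldNE_ext; intro a. rewrite foldNE_map.
    transitivity (foldNE (meet L) (fun b => join L (SJ L v a) (SJ L v b)) B).
    + apply foldNE_ext; intro b. apply SJ_app.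
    + symmetry. apply (foldNE_morph (meet L) (meet L) (fun z => join L (SJ L v a) z)).
      intros; apply join_meet_distr_l; auto.
  - symmetry. apply (foldNE_morph (meet L) (meet L) (fun z => join L z (foldNE (meet L) (SJ L v) B))).
    intros; apply join_meet_distr_r; auto.
Qed.

Lemma SJ_rowmul L v a b : SJ L v (rowmul a b) = mul L (SJ L v a) (SJ L v b).
Proof.
  unfold rowmul, SJ. rewrite foldNE_bind by apply jassoc.
  transitivity (foldNE (join L) (fun x => mul L (ev L v x) (foldNE (join L) (ev L v) b)) a).
  - apply foldNE_ext; intro x. rewrite foldNE_map.
    symmetry. apply (foldNE_morph (join L) (join L) (fun z => mul L (ev L v x) z)).
    intros; apply mul_join_l.
  - symmetry. apply (foldNE_morph (join L) (join L) (fun z => mul L z (foldNE (join L) (ev L v) b))).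
    intros; apply mul_join_r.
Qed.

Lemma SM_mul L (FD : fully_distributive L) v A B :
  SM L v (nf_mul A B) = mul L (SM L v A) (SM L v B).
Proof.
  unfold nf_mul, SM. rewrite foldNE_bind by apply massoc.
  transitivity (foldNE (meet L) (fun a => mul L (SJ L v a) (foldNE (meet L) (SJ L v) B)) A).
  - apply foldNE_ext; intro a. rewrite foldNE_map.
    transitivity (foldNE (meet L) (fun b => mul L (SJ L v a) (SJ L v b)) B).
    + apply foldNE_ext; intro b. apply SJ_rowmul.
    + symmetry. apply (foldNE_morph (meet L) (meet L) (fun z => mul L (SJ L v a) z)).
      intros; apply mul_meet_l; auto.
  - symmetry. apply (foldNE_morph (meet L) (meet L) (fun z => mul L z (foldNE (meet L) (SJ L v) B))).
    intros; apply mul_meet_r; auto.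
Qed.

Lemma SM_rowinv L v r : SM L v (rowinv r) = inv L (SJ L v r).
Proof.
  unfold rowinv, SM. rewrite foldNE_map. unfold SJ.
  symmetry. apply (foldNE_morph (join L) (meet L) (inv L)). intros; apply inv_join.
Qed.

Lemma SM_inv L (FD : fully_distributive L) v A : SM L v (nf_inv A) = inv L (SM L v A).
Proof.
  unfold nf_inv.
  rewrite (foldNE_morph nf_join (join L) (SM L v)) by (intros; apply SM_join; auto).
  unfold SM at 2. rewrite (foldNE_morph (meet L) (join L) (inv L)) by (intros; apply inv_meet).
  apply foldNE_ext; intro r. apply SM_rowinv.
Qed.

Lemma nf_correct L (FD : fully_distributive L) v t : eval L v t = SM L v (nf t).
Proof.
  induction t; simpl.
  - reflexivity.
  - rewrite SM_app, IHt1, IHt2; reflexivity.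
  - rewrite SM_join, IHt1, IHt2 by auto; reflexivity.
  - rewrite SM_mul, IHt1, IHt2 by auto; reflexivity.
  - rewrite SM_inv, IHt by auto; reflexivity.
  - reflexivity.
Qed.

Definition out_row (r : row) : list term := map (@proj1_sig _ _) (fst r :: snd r).
Definition out (A : cnf) : list (list term) := map out_row (fst A :: snd A).

Lemma eval_foldJ L v : forall l i,
  eval L v (fold_left TJoin l i) = fold_left (fun acc y => join L acc (eval L v y)) l (eval L v i).
Proof. induction l; simpl; intros; auto. Qed.

Lemma eval_foldM L v : forall l i,
  eval L v (fold_left TMeet l i) = fold_left (fun acc y => meet L acc (eval L v y)) l (eval L v i).
Proof. induction l; simpl; intros; auto. Qed.

Lemma eval_row L v r : eval L v (big_join (out_row r)) = SJ L v r.
Proof.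
  destruct r as [x xs]. unfold out_row, SJ, foldNE; simpl.
  rewrite eval_foldJ. apply (fold_map (join L) (eval L v) (@proj1_sig _ _)).
Qed.

Lemma eval_out L v A : eval L v (meet_of_joins (out A)) = SM L v A.
Proof.
  destruct A as [r rs]. unfold meet_of_joins, out, SM, foldNE. cbn [map big_meet fst snd].
  rewrite eval_foldM. rewrite eval_row. rewrite (fold_map (meet L) (eval L v) big_join).
  rewrite (fold_map (meet L) (fun y => eval L v (big_join y)) out_row).
  apply fold_ext. intro y. apply eval_row.
Qed.

Theorem lemma2p1 :
  { f : term -> list (list term) |
    forall t : term,
      f t <> nil /\
      (forall row, In row (f t) -> row <> nil /\ forall s, In s row -> is_basic s) /\
      (forall L : IRL, fully_distributive L -> models_eq L t (meet_of_joins (f t))) }.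
Proof.
  exists (fun t => out (nf t)). intro t. split; [|split].
  - unfold out. simpl. discriminate.
  - intros rw Hin. unfold out in Hin. apply in_map_iff in Hin.
    destruct Hin as [r [<- _]]. split.
    + unfold out_row; simpl; discriminate.
    + intros s Hs. unfold out_row in Hs. apply in_map_iff in Hs.
      destruct Hs as [b [<- _]]. apply (proj2_sig b).
  - intros L FD v. rewrite eval_out. apply nf_correct; auto.
Qed.
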